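(* Let $\mathcal{L}$ be a nonempty set and $\mathcal{C}: 2^{\mathcal{L}}\to 2^{\mathcal{L}}$ a C-logics. For every $A\subseteq\mathcal{L}$, $\mathcal{C}(A)=\mathrm{Cn}(\mathcal{C}(A))=\mathcal{C}(\mathrm{Cn}(A))$.
   Context: A C-logics is a map $\mathcal{C}: 2^{\mathcal{L}}\to 2^{\mathcal{L}}$ satisfying Inclusion ($A\subseteq\mathcal{C}(A)$) and Cumulativity ($A\subseteq B\subseteq\mathcal{C}(A)\Rightarrow\mathcal{C}(A)=\mathcal{C}(B)$) for all $A,B\subseteq\mathcal{L}$. A theory is a set $T\subseteq\mathcal{L}$ with $\mathcal{C}(T)=T$. $\mathrm{Cn}(A)=\bigcap\{T : T\supseteq A,\ T\text{ a theory}\}$. *)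

(* Defs.v *)
From mathcomp Require Import all_boot.
From mathcomp Require Import boolp classical_sets.
Local Open Scope classical_set_scope.

Definition inclusion {L : Type} (C : set L -> set L) : Prop :=
  forall A : set L, A `<=` C A.

Definition cumulativity {L : Type} (C : set L -> set L) : Prop :=
  forall A B : set L, A `<=` B -> B `<=` C A -> C A = C B.

Definition C_logics {L : Type} (C : set L -> set L) : Prop :=
  inclusion C /\ cumulativity C.

Definition theory {L : Type} (C : set L -> set L) (T : set L) : Prop :=
  C T = T.

Definition Cn {L : Type} (C : set L -> set L) (A : set L) : set L :=
  \bigcap_(T in [set T | A `<=` T /\ theory C T]) T.

(* Main.v *)
Require Import Defs.
From mathcomp Require Import all_boot.
From mathcomp Require Import boolp classical_sets.
Local Open Scope classical_set_scope.

Theorem lemma10 (L : Type) (L_nonempty : inhabited L) (C : set L -> set L)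
  (HC : C_logics C) :
  forall A : set L, C A = Cn C (C A) /\ C A = C (Cn C A).
Proof.
move=> A; case: HC => Hinc Hcum.
have thCA : theory C (C A).
  by rewrite /theory -(Hcum A (C A)) //; exact: Hinc.
have sub : forall B, B `<=` C A -> Cn C B `<=` C A.
  by move=> B HB x Hx; apply: Hx; split.
have sup : forall B, B `<=` Cn C B.
  by move=> B x Bx T [HT _]; apply: HT.
split.
  apply/seteqP; split; [exact: sup | exact: sub].
apply: Hcum; first exact: sup.
apply: sub; exact: Hinc.
Qed.
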